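(* Let $G$ be a $k$-chromatic graph and $\{u,v\}$ an implicit-edge (respectively implicit-identity) of $G$. Let $0\le \ell\le k-2$ and let $S_1,\dots,S_\ell$ be vertex sets not containing $u$ or $v$ such that, for each $i$, $S_i$ is a critical independent set of $G-(S_1\cup\dots\cup S_{i-1})$. Then $\{u,v\}$ is an implicit-edge (respectively implicit-identity) of $H=G-(S_1\cup\dots\cup S_\ell)$, with respect to $\chi(H)=k-\ell$.
   Context: All graphs are finite, simple and connected. For a graph $G$ and vertices $u,v$, $G-uv$ denotes $G$ with the edge $uv$ removed if $uv\in E(G)$ (and $G$ itself otherwise). A $k$-coloring is a proper vertex coloring with colors from $\{1,\dots,k\}$. Given a $k$-chromatic graph $G$, a pair of distinct vertices $\{u,v\}$ is an implicit-edge of $G$ iff there is no $k$-coloring $c$ of $G-uv$ with $c(u)=c(v)$, and an implicit-identity of $G$ iff there is no $k$-coloring $c$ of $G-uv$ with $c(u)\neq c(v)$. An independent set $S$ of a $k$-chromatic graph $G$ is critical iff $\chi(G-S)=k-1$. *)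

(* Defs.v *)
From mathcomp Require Import all_boot.
Set Implicit Arguments. Unset Strict Implicit. Unset Printing Implicit Defensive.

(* A graph is a vertex set V : {set T} over a finite type T together with an
   adjacency relation e : rel T; only edges between vertices of V count
   (so deleting vertices = shrinking V, i.e. taking the induced subgraph). *)

Definition simple_rel (T : finType) (e : rel T) : Prop :=
  symmetric e /\ irreflexive e.

Definition connected_graph (T : finType) (V : {set T}) (e : rel T) : Prop :=
  forall x y, x \in V -> y \in V ->
    connect [rel a b | [&& a \in V, b \in V & e a b]] x y.

Definition del_edge (T : finType) (e : rel T) (u v : T) : rel T :=
  [rel x y | e x y && ~~ (((x == u) && (y == v)) || ((x == v) && (y == u)))].

Definition is_coloring (T : finType) (V : {set T}) (e : rel T) (k : nat)
    (c : T -> 'I_k) : Prop :=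
  forall x y, x \in V -> y \in V -> e x y -> c x != c y.

Definition colorable (T : finType) (V : {set T}) (e : rel T) (k : nat) : Prop :=
  exists c : T -> 'I_k, is_coloring V e c.

Definition chromatic (T : finType) (V : {set T}) (e : rel T) (k : nat) : Prop :=
  colorable V e k /\ forall j, j < k -> ~ colorable V e j.

Definition independent (T : finType) (V : {set T}) (e : rel T) (S : {set T}) : Prop :=
  S \subset V /\ forall x y, x \in S -> y \in S -> ~~ e x y.

Definition critical_indep (T : finType) (V : {set T}) (e : rel T) (S : {set T}) : Prop :=
  independent V e S /\
  exists k, 0 < k /\ chromatic V e k /\ chromatic (V :\: S) e k.-1.

Definition implicit_edge (T : finType) (V : {set T}) (e : rel T) (k : nat) (u v : T) : Prop :=
  [/\ u \in V, v \in V, u != v &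
   ~ exists c : T -> 'I_k, is_coloring V (del_edge e u v) c /\ c u = c v].

Definition implicit_identity (T : finType) (V : {set T}) (e : rel T) (k : nat) (u v : T) : Prop :=
  [/\ u \in V, v \in V, u != v &
   ~ exists c : T -> 'I_k, is_coloring V (del_edge e u v) c /\ c u != c v].

(* S_1 ∪ ... ∪ S_i, with the sets indexed from 0: \bigcup_(j < i) S j *)
Definition prefix_union (T : finType) (S : nat -> {set T}) (i : nat) : {set T} :=
  \bigcup_(j < i) S j.

(* Main.v *)
Require Import Defs.
From mathcomp Require Import all_boot.
Set Implicit Arguments. Unset Strict Implicit. Unset Printing Implicit Defensive.

Lemma chrom_uniq (T : finType) (V : {set T}) (e : rel T) a b :
  chromatic V e a -> chromatic V e b -> a = b.
Proof.
move=> [Ca Na] [Cb Nb]; case: (ltngtP a b) => // H.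
- by case: (Nb _ H Ca).
- by case: (Na _ H Cb).
Qed.

Lemma prefix_unionS (T : finType) (S : nat -> {set T}) i :
  prefix_union S i.+1 = prefix_union S i :|: S i.
Proof. by rewrite /prefix_union big_ord_recr. Qed.

Lemma in_prefix (T : finType) (S : nat -> {set T}) l x :
  (x \in prefix_union S l) = [exists i : 'I_l, x \in S i].
Proof.
apply/bigcupP/existsP => [[i _ H]|[i H]]; by exists i.
Qed.

Lemma lt_aux k l (i : 'I_l) : l <= k -> k - l + i < k.
Proof. move=> H; by rewrite -{2}(subnK H) ltn_add2l. Qed.

Section Ext.
Variables (T : finType) (k l : nat) (Hlk : l <= k) (S : nat -> {set T})
  (c : T -> 'I_(k - l)).

Definition ext (x : T) : 'I_k :=
  match [pick i : 'I_l | x \in S i] with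
  | Some i => Ordinal (lt_aux i Hlk)
  | None => widen_ord (leq_subr l k) (c x)
  end.

Lemma ext_none x : (forall i, i < l -> x \notin S i) -> ext x = widen_ord (leq_subr l k) (c x).
Proof.
move=> H; rewrite /ext; case: pickP => // i Hi.
by move: (H i (ltn_ord i)); rewrite Hi.
Qed.

Lemma ext_coloring (V : {set T}) (e : rel T) :
  (forall i, i < l -> forall x y, x \in S i -> y \in S i -> ~~ e x y) ->
  is_coloring (V :\: prefix_union S l) e c ->
  is_coloring V e ext.
Proof.
move=> Hind Hc x y Hx Hy Hxy; rewrite /ext.
have inVl : forall z, z \in V -> (forall i : 'I_l, z \notin S i) ->
   z \in V :\: prefix_union S l.
  move=> z Hz Hn; rewrite inE Hz andbT in_prefix; apply/existsP => [[i Hi]].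
  by move: (Hn i); rewrite Hi.
case: pickP => [i Hi|Hn1]; case: pickP => [j Hj|Hn2].
- case: (eqVneq i j) => [Eij|Nij].
  + subst j; by move: (Hind i (ltn_ord i) x y Hi Hj); rewrite Hxy.
  + apply/negP => /eqP [] /eqP; rewrite eqn_add2l => /eqP Eij.
    by move: Nij; rewrite (val_inj Eij) eqxx.
- apply/negP => /eqP [] Ev.
  have := ltn_ord (c y); rewrite -Ev => H.
  by move: (leq_ltn_trans (leq_addr i (k - l)) H); rewrite ltnn.
- apply/negP => /eqP [] Ev.
  have := ltn_ord (c x); rewrite Ev => H.
  by move: (leq_ltn_trans (leq_addr j (k - l)) H); rewrite ltnn.
- have Hc' := Hc x y (inVl x Hx (fun i => negbT (Hn1 i))) (inVl y Hy (fun i => negbT (Hn2 i))) Hxy.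
  apply/negP => /eqP [] Ev; move: Hc'; by rewrite (val_inj Ev) eqxx.
Qed.
End Ext.

Lemma del_sub (T : finType) (e : rel T) u v x y : del_edge e u v x y -> e x y.
Proof. by rewrite /del_edge /= => /andP []. Qed.


Theorem theorem3 (T : finType) (V : {set T}) (e : rel T) (k l : nat)
  (u v : T) (S : nat -> {set T}) :
  simple_rel e ->
  connected_graph V e ->
  chromatic V e k ->
  l + 2 <= k ->
  (forall i, i < l -> (u \notin S i) && (v \notin S i)) ->
  (forall i, i < l -> critical_indep (V :\: prefix_union S i) e (S i)) ->
  (implicit_edge V e k u v ->
     chromatic (V :\: prefix_union S l) e (k - l) /\
     implicit_edge (V :\: prefix_union S l) e (k - l) u v) /\
  (implicit_identity V e k u v ->
     chromatic (V :\: prefix_union S l) e (k - l) /\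
     implicit_identity (V :\: prefix_union S l) e (k - l) u v).
Proof.
move=> _ _ Hk Hlk2 Huv Hcrit.
have Hlk : l <= k by apply: leq_trans Hlk2; rewrite leq_addr.
have Hchr : forall i, i <= l -> chromatic (V :\: prefix_union S i) e (k - i).
  elim=> [|i IH] Hi.
    rewrite subn0 /prefix_union big_ord0 setD0 //.
  have Hil : i < l by [].
  have [_ [kk [_ [H1 H2]]]] := Hcrit i Hil.
  have Ekk := chrom_uniq H1 (IH (ltnW Hi)); subst kk.
  by rewrite prefix_unionS -setDDl subnS.
have HC := Hchr l (leqnn l).
have Hind : forall i, i < l -> forall x y, x \in S i -> y \in S i ->
    ~~ del_edge e u v x y.
  move=> i Hi x y Hx Hy; have [[_ Hi2] _] := Hcrit i Hi.
  apply/negP => /del_sub; apply/negP; exact: Hi2.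
have uVl : forall w, w \in V -> (forall i, i < l -> w \notin S i) ->
    w \in V :\: prefix_union S l.
  move=> w Hw Hn; rewrite inE Hw andbT in_prefix; apply/existsP => [[i Hi]].
  by move: (Hn i (ltn_ord i)); rewrite Hi.
have Hu : forall i, i < l -> u \notin S i by move=> i Hi; case/andP: (Huv i Hi).
have Hv : forall i, i < l -> v \notin S i by move=> i Hi; case/andP: (Huv i Hi).
split.
- move=> [uV vV nuv Hn]; split => //; split; [exact: uVl|exact: uVl|done|].
  move=> [c [Hc Ec]]; apply: Hn; exists (ext Hlk S c); split.
    exact: (ext_coloring Hlk Hind Hc).
  by rewrite (ext_none Hlk c Hu) (ext_none Hlk c Hv) Ec.
- move=> [uV vV nuv Hn]; split => //; split; [exact: uVl|exact: uVl|done|].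
  move=> [c [Hc Ec]]; apply: Hn; exists (ext Hlk S c); split.
    exact: (ext_coloring Hlk Hind Hc).
  rewrite (ext_none Hlk c Hu) (ext_none Hlk c Hv).
  apply/negP => /eqP [] Ev; move: Ec; by rewrite (val_inj Ev) eqxx.
Qed.
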